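(* For every Johnson graph $J(m,k)$ (with $m,k\in\mathbb N$, $k\le m$), the VC-dimension of the edge relation on $J(m,k)$ is at most $4$.
   Context: For $m\ge k$ and a set $X$ with $|X|=m$, the Johnson graph $J(m,k)$ has as vertices the $k$-element subsets of $X$, two vertices adjacent iff their intersection has size $k-1$. The VC-dimension of the edge relation on a graph $G$ is the VC-dimension of the set system $(V(G),\{N(v)\mid v\in V(G)\})$, where $N(v)$ is the set of vertices adjacent to $v$; i.e. the largest size of a set $A\subseteq V(G)$ such that $\{A\cap N(v)\mid v\in V(G)\}$ equals the power set of $A$. *)

(* Defs.v *)
From mathcomp Require Import all_boot.
Set Implicit Arguments. Unset Strict Implicit. Unset Printing Implicit Defensive.

Definition johnson_vertex (m k : nat) := {A : {set 'I_m} | #|A| == k}.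

(* Adjacency in J(m,k): intersection has size k-1 (written |A ∩ B| + 1 = k,
   so that nothing is adjacent when k = 0). *)
Definition johnson_adj (m k : nat) : rel (johnson_vertex m k) :=
  fun u v => (#|val u :&: val v|).+1 == k.

Definition nbhd (T : finType) (e : rel T) (v : T) : {set T} := [set w | e v w].

Definition shattered (T : finType) (e : rel T) (A : {set T}) : Prop :=
  [set A :&: nbhd e v | v in [set: T]] = powerset A.

Definition vc_dim_le (T : finType) (e : rel T) (d : nat) : Prop :=
  forall A : {set T}, shattered e A -> #|A| <= d.

(* Main.v *)
Require Import Defs.
From mathcomp Require Import all_boot zify.
Set Implicit Arguments. Unset Strict Implicit. Unset Printing Implicit Defensive.

Definition I5 := iota 0 5.
Fixpoint allbl (n : nat) : seq (seq bool) :=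
  if n is n'.+1 then [seq b :: s | b <- [:: false; true], s <- allbl n'] else [:: [::]].
Definition code (i j : nat) : nat :=
  nth 0 (nth [::] [:: [::0;0;1;2;3]; [::0;0;4;5;6]; [::1;4;0;7;8]; [::2;5;7;0;9]; [::3;6;8;9;0]] i) j.
Definition relb (c : seq bool) (i j : nat) : bool := if i == j then true else nth false c (code i j).
Definition isequiv (c : seq bool) :=
  all (fun i => all (fun j => all (fun l => ~~ (relb c i j && relb c j l) || relb c i l) I5) I5) I5.
Definition EQ := filter isequiv (allbl 10).
Definition validb (e : nat -> nat -> bool) (d : nat) (cnt : bool) (b : seq bool) :=
  all (fun i => all (fun j =>
    [&& (~~ e i j || (nth false b i == nth false b j)),
        ((d == 0) ==> (nth false b i != cnt)),
        ((d <= 1) ==> ~~ [&& nth false b i == cnt, nth false b j == cnt & ~~ e i j]) &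
        all (fun l => ~~ [&& nth false b i == cnt, nth false b j == cnt, nth false b l == cnt
                          & ~~ [|| e i j, e i l | e j l]]) I5]) I5) I5.
Definition trace (d : nat) (bx bY : seq bool) : seq bool :=
  [seq (nat_of_bool (nth false bY i)).+1 == d + nth false bx i | i <- I5].
Definition S3 := filter (fun s => count id s == 3) (allbl 5).
Definition D3 := [:: 0; 1; 2].
Definition tracesL (VX VY : seq (seq (seq bool))) :=
  flatten [seq flatten [seq [seq trace d bx bY | bY <- nth [::] VY d]
                       | bx <- nth [::] VX d] | d <- D3].
Definition goodL VX VY := has (fun S => S \notin tracesL VX VY) S3.
Definition distinctb (c1 c2 : seq bool) :=
  all (fun i => all (fun j => (i == j) || ~~ (relb c1 i j && relb c2 i j)) I5) I5.
Definition VL (c : seq bool) (cnt : bool) := [seq filter (validb (relb c) d cnt) (allbl 5) | d <- D3].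
Definition bigcheck :=
  let P := [seq (c, VL c false, VL c true) | c <- EQ] in
  all (fun p1 => all (fun p2 => if distinctb p1.1.1 p2.1.1 then goodL p1.1.2 p2.2 else true) P) P.
Lemma bigcheck_ok : bigcheck. Proof. vm_compute. reflexivity. Qed.

Lemma size_allbl n s : s \in allbl n -> size s = n.
Proof.
elim: n s => [|n IH] s; first by rewrite inE => /eqP->.
by move/allpairsP => [[b t]] /= [_ /IH <- ->].
Qed.

Lemma mem_allbl s : s \in allbl (size s).
Proof.
elim: s => [|b s IH]; first by rewrite inE.
by apply/allpairsP; exists (b, s); split => //; case: b.
Qed.

Definition cbits (T : eqType) (X : nat -> T) : seq bool :=
  [seq X p.1 == X p.2 | p <- [:: (0,1);(0,2);(0,3);(0,4);(1,2);(1,3);(1,4);(2,3);(2,4);(3,4)]].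

Lemma relb_cbits (T : eqType) (X : nat -> T) i j : i < 5 -> j < 5 ->
  relb (cbits X) i j = (X i == X j).
Proof.
move=> Hi Hj; rewrite /relb.
case: eqP => [->|ne]; first by rewrite eqxx.
case: i Hi ne => [|[|[|[|[|i]]]]] Hi ne //; case: j Hj ne => [|[|[|[|[|j]]]]] Hj ne //;
  try (by case: ne); by rewrite /= ?eq_sym.
Qed.

Lemma mem_I5 i : (i \in I5) = (i < 5).
Proof. by rewrite mem_iota. Qed.

Lemma cbits_EQ (T : eqType) (X : nat -> T) : cbits X \in EQ.
Proof.
rewrite mem_filter; apply/andP; split; last by apply: mem_allbl.
apply/allP => i; rewrite mem_I5 => Hi; apply/allP => j; rewrite mem_I5 => Hj.
apply/allP => l; rewrite mem_I5 => Hl.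
rewrite !relb_cbits //; case: eqP => //= ->; case: eqP => //= ->; by rewrite eqxx orbT.
Qed.

Lemma card_le1_eq (T : finType) (P : {set T}) a b :
  #|P| <= 1 -> a \in P -> b \in P -> a = b.
Proof.
move=> HP Ha Hb; apply/eqP; apply: contraLR HP => Hab.
rewrite -ltnNge; have: [set a; b] \subset P by apply/subsetP => z; rewrite !inE => /orP[]/eqP->.
by move/subset_leq_card; rewrite cards2 Hab.
Qed.

Lemma card_le2_eq (T : finType) (P : {set T}) a b c :
  #|P| <= 2 -> a \in P -> b \in P -> c \in P -> [|| a == b, a == c | b == c].
Proof.
move=> HP Ha Hb Hc; apply: contraLR HP; rewrite !negb_or => /and3P[ab ac bc].
rewrite -ltnNge; have: a |: [set b; c] \subset P.
  by apply/subsetP => z; rewrite !inE => /or3P[]/eqP->.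
move/subset_leq_card; rewrite cardsU1 cards2 bc !inE negb_or ab ac.
by [].
Qed.

Lemma valid_gen (T : finType) (P : {set T}) (F : nat -> T) (b : seq bool) (cnt : bool) d :
  d < 3 -> #|P| = d -> (forall i, i < 5 -> (nth false b i == cnt) -> F i \in P) ->
  (forall i j, i < 5 -> j < 5 -> F i = F j -> nth false b i = nth false b j) ->
  validb (relb (cbits F)) d cnt b.
Proof.
move=> Hd HP HF HFb.
apply/allP => i; rewrite mem_I5 => Hi; apply/allP => j; rewrite mem_I5 => Hj.
rewrite !relb_cbits //; apply/and4P; split.
- by case: eqP => //= /HFb ->; rewrite ?eqxx.
- apply/implyP => /eqP d0; apply/negP => /HF H; have := H Hi.
  by move/cards0_eq: (etrans HP d0) => ->; rewrite inE.
- apply/implyP => d1; apply/negP => /and3P[ci cj]; case/negP.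
  by apply/eqP/(card_le1_eq (P:=P)); [rewrite HP|apply: HF|apply: HF].
- apply/allP => l; rewrite mem_I5 => Hl; rewrite ?relb_cbits //.
  apply/negP => /and4P[ci cj cl]; case/negP.
  by apply: (card_le2_eq (P:=P)); [rewrite HP -ltnS|apply: HF|apply: HF|apply: HF].
Qed.

Lemma good_of (T : eqType) (X Y : nat -> T) :
  (forall i j, i < 5 -> j < 5 -> i != j -> X i = X j -> Y i = Y j -> False) ->
  goodL (VL (cbits X) false) (VL (cbits Y) true).
Proof.
move=> Hd; have := bigcheck_ok; rewrite /bigcheck.
set P := [seq _ | c <- EQ].
have HP : forall c, c \in EQ -> (c, VL c false, VL c true) \in P.
  by move=> c Hc; apply: (map_f (fun c => (c, VL c false, VL c true))).
move/allP/(_ _ (HP _ (cbits_EQ X)))/allP/(_ _ (HP _ (cbits_EQ Y))) => /=.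
have -> : distinctb (cbits X) (cbits Y).
  apply/allP => i; rewrite mem_I5 => Hi; apply/allP => j; rewrite mem_I5 => Hj.
  rewrite !relb_cbits //; case: (eqVneq i j) => //= ij.
  by apply/negP => /andP[/eqP ? /eqP ?]; apply: (Hd i j).
by [].
Qed.

Lemma abstract_contra (T : finType) (V : {set T}) (k : nat) (X Y : nat -> T)
  (HX : forall i, i < 5 -> X i \in V) (HY : forall i, i < 5 -> Y i \notin V)
  (Hd : forall i j, i < 5 -> j < 5 -> i != j -> X i = X j -> Y i = Y j -> False)
  (HV : #|V| = k)
  (Hreal : forall S : seq bool, size S = 5 -> exists W : {set T}, #|W| = k /\
     forall i, i < 5 -> ((#|W :&: V| + (Y i \in W)).+1 == k + (X i \in W)) = nth false S i) :
  False.
Proof.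
have /hasP [S HS3 HSn] := good_of Hd.
have HS5 : size S = 5 by move: HS3; rewrite mem_filter => /andP[_ /size_allbl].
have HSc : count id S == 3 by move: HS3; rewrite mem_filter => /andP[].
have [W [HWk HW]] := Hreal S HS5.
set n := #|W :&: V|.
have Hn : n <= k by rewrite -HV /n subset_leq_card // subsetIr.
set d := k - n.
have Hk : k = n + d by rewrite /d subnKC.
case: (ltnP d 3) => Hd3; last first.
  have : S = nseq 5 false.
    apply: (@eq_from_nth _ false); first by rewrite HS5.
    move=> i; rewrite HS5 => Hi; rewrite nth_nseq Hi -HW //.
    apply/negP => /eqP; rewrite Hk; case: (X i \in W); case: (Y i \in W) => /=; lia.
  by move=> ES; move: HSc; rewrite ES.
pose bx := [seq X i \in W | i <- I5].
pose bY := [seq Y i \in W | i <- I5].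
have nbx i : i < 5 -> nth false bx i = (X i \in W).
  by move=> Hi; rewrite (nth_map 0) ?nth_iota.
have nbY i : i < 5 -> nth false bY i = (Y i \in W).
  by move=> Hi; rewrite (nth_map 0) ?nth_iota.
have Vx : validb (relb (cbits X)) d false bx.
  apply: (valid_gen (P := V :\: W)) => //.
  - by move/eqP: (cardsID W V); rewrite setIC HV -/n Hk eqn_add2l => /eqP.
  - by move=> i Hi; rewrite nbx // !inE HX // andbT => /eqP ->.
  - by move=> i j Hi Hj E; rewrite !nbx // E.
have VY : validb (relb (cbits Y)) d true bY.
  apply: (valid_gen (P := W :\: V)) => //.
  - by move/eqP: (cardsID V W); rewrite HWk -/n Hk eqn_add2l => /eqP.
  - by move=> i Hi; rewrite nbY // !inE (negbTE (HY i Hi)) => /eqP ->.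
  - by move=> i j Hi Hj E; rewrite !nbY // E.
have Htr : trace d bx bY = S.
  apply: (@eq_from_nth _ false); first by rewrite HS5 size_map size_iota.
  move=> i; rewrite size_map size_iota => Hi.
  rewrite -HW // (nth_map 0) ?size_iota // nth_iota // add0n nbx // nbY //.
  by rewrite -/n; case: (X i \in W); case: (Y i \in W); apply/idP/idP => /eqP H; apply/eqP; lia.
move/negP: HSn; apply; rewrite -Htr /tracesL.
apply/flatten_mapP; exists d; first by rewrite (_ : D3 = iota 0 3) // mem_iota.
have HnD : nth 0 D3 d = d by move: Hd3; rewrite /D3; case: (d) => [|[|[|]]].
apply/flatten_mapP; exists bx.
  rewrite (nth_map 0) ?HnD // mem_filter Vx /=.
  by have := mem_allbl bx; rewrite size_map size_iota.
apply/map_f; rewrite (nth_map 0) ?HnD // mem_filter VY /=.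
by have := mem_allbl bY; rewrite size_map size_iota.
Qed.


Theorem mainTheorem7 (m k : nat) (hkm : k <= m) :
  vc_dim_le (@johnson_adj m k) 4.
Proof.
move=> A HA; rewrite leqNgt; apply/negP => H5.
have [v0 _] : exists v0, v0 \in A by apply/card_gt0P; apply: leq_ltn_trans _ H5.
pose a i := nth v0 (enum A) i.
have Hsz : size (enum A) = #|A| by rewrite cardE.
have aA i : i < 5 -> a i \in A.
  by move=> Hi; rewrite -mem_enum mem_nth // Hsz; apply: leq_trans H5.
have ainj i j : i < 5 -> j < 5 -> a i = a j -> i = j.
  move=> Hi Hj E; apply/eqP; rewrite -(nth_uniq v0 (s := enum A) _ _ (enum_uniq _)) ?Hsz.
  - by apply/eqP.
  - by apply: leq_trans H5.
  - by apply: leq_trans H5.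
have real S : exists w, forall i, i < 5 -> johnson_adj w (a i) = nth false S i.
  pose B := [set u in A | has (fun i => nth false S i && (u == a i)) I5].
  have : B \in powerset A by rewrite powersetE; apply/subsetP => u; rewrite inE => /andP[].
  rewrite -HA => /imsetP [w _ EB]; exists w => i Hi.
  have : (a i \in B) = nth false S i.
    rewrite inE aA // andTb; apply/hasP/idP => [[j Hj /andP[Sj /eqP E]] | Si].
      by rewrite (ainj i j) // -mem_I5.
    by exists i; rewrite ?mem_I5 // Si eqxx.
  by move <-; rewrite EB !inE aA.
have [v Hv] := real (nseq 5 true).
have Hv' i : i < 5 -> johnson_adj v (a i) by move=> Hi; rewrite Hv // nth_nseq Hi.
set Vs := val v.
have cardV : #|Vs| = k by apply/eqP; exact: (valP v).
have cardA i : #|val (a i)| = k by apply/eqP; exact: (valP (a i)).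
have D1 i : i < 5 -> #|Vs :\: val (a i)| = 1.
  move=> Hi; have := Hv' i Hi; rewrite /johnson_adj => /eqP H.
  have H' : #|Vs :&: val (a i)|.+1 = k := H; have := cardsID (val (a i)) Vs; rewrite cardV; lia.
have D2 i : i < 5 -> #|val (a i) :\: Vs| = 1.
  move=> Hi; have := Hv' i Hi; rewrite /johnson_adj => /eqP H.
  have H' : #|Vs :&: val (a i)|.+1 = k := H; have := cardsID Vs (val (a i)); rewrite setIC cardA; lia.
have [z0 _] : exists z0 : 'I_m, z0 \in Vs :\: val (a 0) by apply/card_gt0P; rewrite D1.
pose X i := odflt z0 [pick z in Vs :\: val (a i)].
pose Y i := odflt z0 [pick z in val (a i) :\: Vs].
have pick1 (P : {set 'I_m}) : #|P| = 1 -> odflt z0 [pick z in P] \in P.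
  move=> HP; case: pickP => [z //|H0].
  have : #|P| = 0 by apply: eq_card0 => z; exact: H0.
  by rewrite HP.
have XV i : i < 5 -> X i \in Vs :\: val (a i) by move=> Hi; apply: pick1; apply: D1.
have YA i : i < 5 -> Y i \in val (a i) :\: Vs by move=> Hi; apply: pick1; apply: D2.
have memA i z : i < 5 -> (z \in val (a i)) = (z \in Vs) && (z != X i) || (z == Y i).
  move=> Hi; have HX := XV i Hi; have HY := YA i Hi.
  move: HX HY; rewrite !inE => /andP[nXa XVs] /andP[nYV Ya].
  case Hz: (z \in Vs) => /=.
  - case: eqP => [-> | nzX] /=.
      rewrite (negbTE nXa); case: eqP => // E; by move: nYV; rewrite -E XVs.
    case Za: (z \in val (a i)) => //; exfalso; apply: nzX.
    apply: (card_le1_eq (P := Vs :\: val (a i))); [by rewrite D1 | by rewrite !inE Za Hz | by rewrite !inE nXa XVs].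
  - apply/idP/eqP => [Za | ->//].
    apply: (card_le1_eq (P := val (a i) :\: Vs)); [by rewrite D2 | by rewrite !inE Hz Za | by rewrite !inE nYV Ya].
apply: (abstract_contra (V := Vs) (k := k) (X := X) (Y := Y)).
- by move=> i Hi; move: (XV i Hi); rewrite inE => /andP[].
- by move=> i Hi; move: (YA i Hi); rewrite inE => /andP[].
- move=> i j Hi Hj ij EX EY; move/eqP: ij; apply; apply: ainj => //; apply: val_inj.
  by apply/setP => z; rewrite memA // memA // EX EY.
- exact: cardV.
- move=> S _; have [w Hw] := real S; exists (val w); split; first exact/eqP/(valP w).
  move=> i Hi; rewrite -Hw // /johnson_adj.
  have := XV i Hi; rewrite inE => /andP[_ XVs].
  have := YA i Hi; rewrite inE => /andP[YnV YAi].
  have E : #|val w :&: val (a i)| + (X i \in val w) = #|val w :&: Vs| + (Y i \in val w).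
    rewrite (cardsD1 (X i) (val w :&: Vs)) (cardsD1 (Y i) (val w :&: val (a i))).
    have -> : (val w :&: Vs) :\ X i = (val w :&: val (a i)) :\ Y i.
      apply/setP => z; rewrite !inE memA //; case: (eqVneq z (Y i)) => [->|nzY] /=.
        by rewrite (negbTE YnV) !andbF.
      by case: (z \in val w); case: (z \in Vs); case: (z == X i).
    rewrite !inE XVs YAi !andbT; by rewrite addnAC [in RHS]addnAC (addnC (Y i \in _)).
  by rewrite -E -addSn eqn_add2r.
Qed.
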